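(* Consider the downlink RIS-aided multi-cell network with directional transmissions described in the context, with unit training overhead $\beta \in \left[0, \frac{T}{M_\text{B}M_\text{R}M_\text{U}+M_\text{B}M_\text{U}}\right)$. Its coverage probability has the form $$\mathcal{P}(\beta) = K\, p_{\text{E}_\text{B}}(\sigma_\text{B}, \theta_\text{B})\, p_{\text{E}_\text{U}}(\sigma_\text{U}, \theta_\text{U}),$$ where $K>0$ does not depend on $\beta$, and $p_{\text{E}_j}$, $\sigma_j$, $\theta_j$ ($j\in\{\text{B},\text{U}\}$) are as defined in the context. Then $\mathcal{P}$ is a monotonically increasing function of the unit training overhead $\beta$.
   Context: Base stations (BSs) and user equipments (UEs) carry uniform linear arrays with $M_\text{B}\ge 1$ and $M_\text{U}\ge 1$ antennas; each reconfigurable intelligent surface (RIS) has $M_\text{R}$ reflecting elements. Beams follow a sectored model with beamwidth $\theta_j = 4/M_j$ (radians) and main-lobe gain $N_j = 2\pi/\theta_j$, $j\in\{\text{B},\text{U}\}$. A frame of length $T$ is split into a channel estimation phase of length $T_\text{E} = \beta(M_\text{B}M_\text{R}M_\text{U}+M_\text{B}M_\text{U})$ and a data phase of length $T_\text{D}=T-T_\text{E}$, where $\beta \in [0, T/(M_\text{B}M_\text{R}M_\text{U}+M_\text{B}M_\text{U}))$ is the unit training overhead (training symbols per antenna-to-antenna/element path). With average channel signal-to-noise ratio $\text{SNR}>0$, the MMSE channel estimation error variance is $\sigma_\text{E}^2 = \frac{1}{1+\beta\,\text{SNR}}$. The beam alignment error $\varepsilon_j$ of end $j$ is a zero-mean Gaussian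 truncated to $[-\pi,\pi]$ with variance parameter $\sigma_j^2 = k_j\pi^2\sigma_\text{E}^2$, where $k_j\in(0,1]$. The probability that the alignment error is at most half the beamwidth is $$p_{\text{E}_j}(\sigma_j,\theta_j) = \mathbb{P}[|\varepsilon_j|\le \theta_j/2] = \frac{\operatorname{erf}\!\left(\frac{\theta_j}{2\sqrt{2\sigma_j^2}}\right)}{\operatorname{erf}\!\left(\frac{\pi}{\sqrt{2\sigma_j^2}}\right)}.$$ The coverage probability is $\mathcal{P}=\mathbb{P}[\text{SINR}>\tau]$ for the typical user at a threshold $\tau$; the serving link has total beamforming gain $N_\text{B}N_\text{U}$ with probability $p_{\text{E}_\text{B}}p_{\text{E}_\text{U}}$ and $0$ otherwise, and all other factors of $\mathcal{P}$ (network geometry, blockage, interference, noise) are collected into the constant $K>0$ independent of $\beta$. *)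

(* Defs.v *)
From Stdlib Require Import Reals Lra.
From Coquelicot Require Import Coquelicot.
Open Scope R_scope.

Definition erf (x : R) : R :=
  2 / sqrt PI * RInt (fun t => exp (- (t ^ 2))) 0 x.

Definition beamwidth (M : nat) : R := 4 / INR M.

Definition sigmaE2 (SNR beta : R) : R := 1 / (1 + beta * SNR).

Definition align_var (k SNR beta : R) : R := k * PI ^ 2 * sigmaE2 SNR beta.

(* p_E(sigma, theta) = P[|eps| <= theta/2] for a zero-mean Gaussian with variance
   parameter sigma2 truncated to [-pi, pi]:
   erf(theta / (2 sqrt(2 sigma2))) / erf(pi / sqrt(2 sigma2)). *)
Definition pE (sigma2 theta : R) : R :=
  erf (theta / (2 * sqrt (2 * sigma2))) / erf (PI / sqrt (2 * sigma2)).

Definition coverage (K SNR kB kU : R) (MB MU : nat) (beta : R) : R :=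
  K * pE (align_var kB SNR beta) (beamwidth MB)
    * pE (align_var kU SNR beta) (beamwidth MU).

Definition beta_max (T : R) (MB MR MU : nat) : R :=
  T / INR (MB * MR * MU + MB * MU).

(* Main.v *)
Require Import Defs.
From Stdlib Require Import Reals Lra.
From Coquelicot Require Import Coquelicot.
Open Scope R_scope.

Definition Eint (x : R) : R := RInt (fun t => exp (- (t ^ 2))) 0 x.

Lemma cont_g (z : R) : continuous (fun t => exp (- (t ^ 2))) z.
Proof. apply (@ex_derive_continuous R_AbsRing R_NormedModule). auto_derive. auto. Qed.

Lemma ex_g (a b : R) : ex_RInt (fun t => exp (- (t ^ 2))) a b.
Proof. apply (@ex_RInt_continuous R_CompleteNormedModule). intros; apply cont_g. Qed.

Lemma Eint_deriv (x : R) : is_derive Eint x (exp (- (x ^ 2))).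
Proof.
  apply (is_derive_RInt (fun t => exp (- (t ^ 2))) Eint 0 x).
  - apply filter_forall. intros y. apply (@RInt_correct R_CompleteNormedModule). apply ex_g.
  - apply cont_g.
Qed.

Lemma Eint_le (x : R) : 0 <= x -> Eint x <= x.
Proof.
  intros Hx. unfold Eint.
  replace x with (RInt (fun _ => 1) 0 x) at 2.
  2:{ rewrite RInt_const. unfold scal; simpl; unfold mult; simpl. ring. }
  apply RInt_le; auto. apply ex_g. apply ex_RInt_const.
  intros t Ht. rewrite <- exp_0. apply exp_le_3 || (destruct (Req_dec (t^2) 0); [rewrite H, Ropp_0; lra|]).
  left. apply exp_increasing. nra.
Qed.

Lemma Eint_pos (x : R) : 0 < x -> 0 < Eint x.
Proof.
  intros Hx. apply Rlt_le_trans with (x * exp (- (x ^ 2))).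
  { apply Rmult_lt_0_compat; auto. apply exp_pos. }
  unfold Eint.
  replace (x * exp (- (x ^ 2))) with (RInt (fun _ => exp (- (x ^ 2))) 0 x).
  2:{ rewrite RInt_const. unfold scal; simpl; unfold mult; simpl. ring. }
  apply RInt_le; try lra. apply ex_RInt_const. apply ex_g.
  intros t Ht. destruct (Req_dec t x). subst; lra.
  left. apply exp_increasing. nra.
Qed.

Lemma incr_pos (f df : R -> R) :
  (forall x, 0 < x -> is_derive f x (df x)) -> (forall x, 0 < x -> 0 < df x) ->
  forall a b, 0 < a -> a < b -> f a < f b.
Proof.
  intros Hd Hp a b Ha Hab.
  destruct (MVT_gen f a b df) as [c [Hc Heq]].
  - intros x Hx. apply Hd. rewrite Rmin_left in Hx; lra.
  - intros x Hx. rewrite Rmin_left in Hx by lra. apply continuity_pt_filterlim.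
    apply (@ex_derive_continuous R_AbsRing R_NormedModule). exists (df x). apply Hd. lra.
  - rewrite Rmin_left in Hc by lra. rewrite Rmax_right in Hc by lra.
    assert (0 < df c * (b - a)). { apply Rmult_lt_0_compat; [apply Hp|]; lra. } lra.
Qed.

Definition Hf (x : R) : R := Eint x * exp (x ^ 2) / x.

Lemma Hf_incr : forall a b, 0 < a -> a < b -> Hf a < Hf b.
Proof.
  apply (incr_pos Hf (fun x => (x + Eint x * exp (x^2) * (2 * x^2 - 1)) / x ^ 2)).
  - intros x Hx. unfold Hf.
    assert (D : is_derive (fun t => Eint t * exp (t ^ 2) / t) x
      (((exp (- (x ^ 2)) * exp (x ^ 2) + Eint x * (2 * x * exp (x^2))) * x - Eint x * exp (x^2) * 1) / x ^ 2)).
    { apply (is_derive_div (fun t => Eint t * exp (t ^ 2)) (fun t => t)); [| | lra].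
      - assert (G : is_derive (fun t : R => exp (t ^ 2)) x (2 * x * exp (x ^ 2))).
        { auto_derive; auto. replace (x * (x * 1)) with (x ^ 2) by ring. ring. }
        exact (@is_derive_mult R_AbsRing Eint (fun t => exp (t ^ 2)) x _ _ (Eint_deriv x) G Rmult_comm).
      - auto_derive; auto. }
    replace ((x + Eint x * exp (x ^ 2) * (2 * x ^ 2 - 1)) / x ^ 2) with
      (((exp (- (x ^ 2)) * exp (x ^ 2) + Eint x * (2 * x * exp (x^2))) * x - Eint x * exp (x^2) * 1) / x ^ 2); auto.
    rewrite <- exp_plus. replace (- (x ^ 2) + x ^ 2) with 0 by ring. rewrite exp_0.
    field. lra.
  - intros x Hx. apply Rdiv_lt_0_compat; [|nra].
    pose proof (Eint_le x (Rlt_le _ _ Hx)). pose proof (Eint_pos x Hx).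
    pose proof (exp_pos (x^2)).
    destruct (Rle_or_lt 1 (2 * x^2)).
    + assert (0 <= Eint x * exp (x ^ 2) * (2 * x ^ 2 - 1)).
      { apply Rmult_le_pos; nra. } lra.
    + pose proof (exp_ineq1_le (- (x^2))).
      assert (Hm : (1 - 2 * x^2) * exp (x^2) < 1).
      { assert ((1 - 2 * x ^ 2) < exp (- (x ^ 2))) by nra.
        replace 1 with (exp (- (x ^ 2)) * exp (x^2)) at 2.
        2:{ rewrite <- exp_plus. replace (- (x ^ 2) + x ^ 2) with 0 by ring. apply exp_0. }
        apply Rmult_lt_compat_r; auto. }
      assert (Eint x * ((1 - 2 * x^2) * exp (x^2)) <= x * ((1 - 2 * x^2) * exp (x^2))).
      { apply Rmult_le_compat_r; auto. apply Rmult_le_pos; nra. }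
      nra.
Qed.

Lemma Eint_Hf (y : R) : 0 < y -> Eint y = Hf y * y * exp (- (y ^ 2)).
Proof.
  intros Hy. unfold Hf. field_simplify; [| lra].
  rewrite Rmult_assoc, <- exp_plus. replace (y ^ 2 + - y ^ 2) with 0 by ring.
  rewrite exp_0. ring.
Qed.

Lemma ratio_incr (a b : R) : 0 < a < b ->
  forall u1 u2, 0 < u1 -> u1 < u2 -> Eint (a * u1) / Eint (b * u1) < Eint (a * u2) / Eint (b * u2).
Proof.
  intros Hab.
  apply (incr_pos (fun u => Eint (a * u) / Eint (b * u))
    (fun u => (a * exp (- ((a * u) ^ 2)) * Eint (b * u) - Eint (a * u) * (b * exp (- ((b * u) ^ 2)))) / Eint (b * u) ^ 2)).
  - intros x Hx.
    assert (Dc : forall c, is_derive (fun u => Eint (c * u)) x (c * exp (- ((c * x) ^ 2)))).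
    { intros c. 
      assert (L : is_derive (fun u : R => c * u) x c). { auto_derive; auto. ring. }
      exact (@is_derive_comp R_AbsRing R_NormedModule Eint (fun u => c * u) x _ _ (Eint_deriv (c * x)) L). }
    apply (is_derive_div (fun u => Eint (a * u)) (fun u => Eint (b * u))); auto.
    apply Rgt_not_eq, Eint_pos. nra.
  - intros x Hx. apply Rdiv_lt_0_compat.
    2:{ apply pow_lt, Eint_pos; nra. }
    assert (Hxa : 0 < a * x) by nra. assert (Hxb : 0 < b * x) by nra.
    rewrite (Eint_Hf _ Hxa), (Eint_Hf _ Hxb).
    pose proof (Hf_incr (a * x) (b * x) Hxa ltac:(nra)).
    pose proof (exp_pos (- ((a * x) ^ 2))). pose proof (exp_pos (- ((b * x) ^ 2))).
    set (ea := exp (- ((a * x) ^ 2))) in *. set (eb := exp (- ((b * x) ^ 2))) in *.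
    replace (a * ea * (Hf (b * x) * (b * x) * eb) - Hf (a * x) * (a * x) * ea * (b * eb))
      with ((ea * eb) * (a * b * x) * (Hf (b * x) - Hf (a * x))) by ring.
    apply Rmult_lt_0_compat; [apply Rmult_lt_0_compat|]; try nra.
Qed.

Lemma pE_eq (s2 th : R) : 0 < s2 -> 0 < th ->
  pE s2 th = Eint (th / 2 * (1 / sqrt (2 * s2))) / Eint (PI * (1 / sqrt (2 * s2))).
Proof.
  intros Hs Ht. assert (Hq : 0 < sqrt (2 * s2)) by (apply sqrt_lt_R0; lra).
  assert (Hp : 0 < sqrt PI) by (apply sqrt_lt_R0; apply PI_RGT_0).
  assert (HE : 0 < Eint (PI * (1 / sqrt (2 * s2)))).
  { apply Eint_pos. apply Rmult_lt_0_compat. apply PI_RGT_0. apply Rdiv_lt_0_compat; lra. }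
  unfold pE, erf. fold (Eint (th / (2 * sqrt (2 * s2)))). fold (Eint (PI / sqrt (2 * s2))).
  replace (th / (2 * sqrt (2 * s2))) with (th / 2 * (1 / sqrt (2 * s2))) by (field; lra).
  replace (PI / sqrt (2 * s2)) with (PI * (1 / sqrt (2 * s2))) by (field; lra).
  field. lra.
Qed.

Lemma pE_mono (k SNR th b1 b2 : R) : 0 < k -> 0 < SNR -> 0 < th < 6 -> 0 <= b1 -> b1 < b2 ->
  0 < pE (align_var k SNR b1) th < pE (align_var k SNR b2) th.
Proof.
  intros Hk HS Ht H1 H12.
  assert (HP := PI_RGT_0). assert (HP3 := PI2_3_2).
  assert (Hv : forall b, 0 <= b -> 0 < align_var k SNR b).
  { intros b Hb. unfold align_var, sigmaE2. apply Rmult_lt_0_compat.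
    apply Rmult_lt_0_compat; [lra| apply pow_lt; lra]. apply Rdiv_lt_0_compat; nra. }
  assert (V1 := Hv b1 H1). assert (V2 := Hv b2 ltac:(lra)).
  rewrite (pE_eq _ _ V1 (proj1 Ht)), (pE_eq _ _ V2 (proj1 Ht)).
  assert (Q1 : 0 < sqrt (2 * align_var k SNR b1)) by (apply sqrt_lt_R0; lra).
  assert (Q2 : 0 < sqrt (2 * align_var k SNR b2)) by (apply sqrt_lt_R0; lra).
  assert (Hlt : align_var k SNR b2 < align_var k SNR b1).
  { unfold align_var, sigmaE2. apply Rmult_lt_compat_l.
    apply Rmult_lt_0_compat; [lra| apply pow_lt; lra].
    unfold Rdiv; rewrite !Rmult_1_l; apply Rinv_lt_contravar; [apply Rmult_lt_0_compat|]; nra. }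
  assert (Qlt : sqrt (2 * align_var k SNR b2) < sqrt (2 * align_var k SNR b1)).
  { apply sqrt_lt_1; lra. }
  split.
  - apply Rdiv_lt_0_compat; apply Eint_pos; apply Rmult_lt_0_compat; try lra;
      apply Rdiv_lt_0_compat; lra.
  - apply ratio_incr. lra. apply Rdiv_lt_0_compat; lra.
    apply Rmult_lt_reg_r with (sqrt (2 * align_var k SNR b1) * sqrt (2 * align_var k SNR b2)). nra.
    field_simplify; lra.
Qed.

Theorem corollary1 (MB MR MU : nat) (T K SNR kB kU : R) :
  (1 <= MB)%nat -> (1 <= MR)%nat -> (1 <= MU)%nat ->
  0 < T -> 0 < K -> 0 < SNR ->
  0 < kB <= 1 -> 0 < kU <= 1 ->
  forall beta1 beta2 : R,
    0 <= beta1 < beta_max T MB MR MU ->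
    0 <= beta2 < beta_max T MB MR MU ->
    beta1 < beta2 ->
    coverage K SNR kB kU MB MU beta1 < coverage K SNR kB kU MB MU beta2.
Proof.
  intros HB HR HU HT HK HS HkB HkU b1 b2 H1 H2 H12.
  assert (Hth : forall M, (1 <= M)%nat -> 0 < beamwidth M < 6).
  { intros M HM. apply le_INR in HM. simpl in HM. unfold beamwidth. split.
    apply Rdiv_lt_0_compat; lra.
    apply Rmult_lt_reg_r with (INR M). lra. field_simplify; lra. }
  destruct (pE_mono kB SNR (beamwidth MB) b1 b2 ltac:(lra) HS (Hth MB HB) ltac:(lra) H12) as [P1 P2].
  destruct (pE_mono kU SNR (beamwidth MU) b1 b2 ltac:(lra) HS (Hth MU HU) ltac:(lra) H12) as [P3 P4].
  unfold coverage.
  set (p1 := pE (align_var kB SNR b1) (beamwidth MB)) in *.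
  set (p2 := pE (align_var kB SNR b2) (beamwidth MB)) in *.
  set (q1 := pE (align_var kU SNR b1) (beamwidth MU)) in *.
  set (q2 := pE (align_var kU SNR b2) (beamwidth MU)) in *.
  apply Rlt_le_trans with (K * p2 * q1).
  - apply Rmult_lt_compat_r; [lra|]. apply Rmult_lt_compat_l; lra.
  - apply Rmult_le_compat_l; [nra|lra].
Qed.
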